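(* Let $G$ be a graph with a string representation $\varphi$ in the plane and let $R$ be a region such that the robber is confined to $G_R$. Suppose there exists a strategy $\mathcal S'$ for some number of cops capturing the robber in $G|_R$ which confines him to $G_R$ throughout. Then there exists a strategy $\mathcal S$ for the same number of cops capturing the robber on $G$, provided the robber is initially confined to $G_R$.
   Context: A string representation assigns to each vertex $v$ a bounded curve $\varphi(v)\subseteq\mathbb{R}^2$ with distinct vertices adjacent iff their curves intersect; finitely many intersection points are assumed. Faces are arc-connected components of the complement of all strings; a region is the closure of a union of faces. A vertex $v$ is contained in $R$ if $\varphi(v)\subseteq\mathrm{int}(R)$; $G_R$ is the subgraph induced by vertices contained in $R$. $G|_R$ is the intersection graph of the arc-connected components of the sets $\varphi(v)\cap R$ (the splits of $v$). Game: cops placed, then robber; alternate moves starting with cops, each stays or moves to an adjacent vertex; capture when a cop occupies the robber's vertex. The robber is confined to a vertex set $D$ if the strategy ensures he is immediately captured upon moving to any vertex outside $D$. *)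

(* Defs.v *)
From HB Require Import structures.
From mathcomp Require Import all_boot all_order all_algebra.
From mathcomp Require Import all_classical all_reals all_analysis.
Set Implicit Arguments. Unset Strict Implicit. Unset Printing Implicit Defensive.
Import Order.TTheory GRing.Theory Num.Theory.
Import numFieldNormedType.Exports.
Local Open Scope classical_set_scope.
Local Open Scope ring_scope.

Section Geometry.
Context {R : realType}.
Local Notation plane := (R * R)%type.

Definition sr_path_in (A : set plane) (x y : plane) : Prop :=
  exists f : R -> plane, {within `[0, 1]%classic, continuous f} /\
    f 0 = x /\ f 1 = y /\ f @` `[0, 1]%classic `<=` A.

Definition sr_arc_component (A C : set plane) : Prop :=
  exists x, A x /\ C = [set y | sr_path_in A x y].

Definition sr_is_curve (C : set plane) : Prop :=
  exists f : R -> plane, {within `[0, 1]%classic, continuous f} /\ C = f @` `[0, 1]%classic.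

Definition sr_bounded_plane (A : set plane) : Prop :=
  exists M : R, forall p, A p -> `|p.1| <= M /\ `|p.2| <= M.

Variables (V : finType) (phi : V -> set plane).

Definition sr_string_rep (adj : rel V) : Prop :=
  (forall v, sr_is_curve (phi v) /\ sr_bounded_plane (phi v)) /\
  (forall v, ~~ adj v v) /\
  (forall u v, u != v -> (adj u v <-> phi u `&` phi v !=set0)) /\
  (forall u v, u != v -> finite_set (phi u `&` phi v)).

Definition sr_strings : set plane := \bigcup_(v in [set: V]) phi v.

Definition sr_face (F : set plane) : Prop := sr_arc_component (~` sr_strings) F.

Definition sr_region (Rg : set plane) : Prop :=
  exists Fs : set (set plane), (forall F, Fs F -> sr_face F) /\
    Rg = closure (\bigcup_(F in Fs) F).

(* vertices sr_contained in Rg: the vertex set of G_R *)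
Definition sr_contained (Rg : set plane) : set V :=
  [set v | phi v `<=` interior Rg].

(* the splits: vertices of G|_R *)
Definition sr_split (Rg : set plane) : Type :=
  {p : V * set plane | sr_arc_component (phi p.1 `&` Rg) p.2}.

Definition sr_split_adj (Rg : set plane) (s t : sr_split Rg) : Prop :=
  sval s <> sval t /\ (sval s).2 `&` (sval t).2 !=set0.

Definition sr_split_in_GR (Rg : set plane) : set (sr_split Rg) :=
  [set s | sr_contained Rg (sval s).1].

End Geometry.

Section Game.
Variables (T : Type) (adj : T -> T -> Prop) (k : nat).

Record cop_strategy := CopStrategy {
  s_init : 'I_k -> T;
  s_move : seq (('I_k -> T) * T) -> ('I_k -> T) }.

Variable S : cop_strategy.

(* history up to round t: [(c 0, r 0); ...; (c t, r t)] where c 0 is the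
   initial placement, r 0 the robber's placement, c (t+1) the cops' move
   after seeing the history up to t, r (t+1) the robber's answer *)
Fixpoint history (r : nat -> T) (t : nat) : seq (('I_k -> T) * T) :=
  match t with
  | 0 => [:: (s_init S, r 0)]
  | t'.+1 => let h := history r t' in rcons h (s_move S h, r t)
  end.

Definition cops (r : nat -> T) (t : nat) : 'I_k -> T :=
  (last (s_init S, r 0) (history r t)).1.

Definition robber_legal (r : nat -> T) : Prop :=
  forall t, r t.+1 = r t \/ adj (r t) (r t.+1).

Definition cop_step_legal (r : nat -> T) (t : nat) : Prop :=
  forall i, cops r t.+1 i = cops r t i \/ adj (cops r t i) (cops r t.+1 i).

Definition captured_at (r : nat -> T) (t : nat) : Prop :=
  exists i, cops r t i = r t \/ cops r t.+1 i = r t.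

Definition captures (A : set T) : Prop :=
  forall r, robber_legal r -> A (r 0) ->
    exists t, captured_at r t /\ forall t', (t' <= t)%N -> cop_step_legal r t'.

Definition confines (D : set T) : Prop :=
  forall r, robber_legal r -> forall t,
    (forall t', (t' < t)%N -> ~ captured_at r t') ->
    ~ D (r t) -> captured_at r t.

End Game.

(* Main.v *)
Require Import Defs.
From HB Require Import structures.
From mathcomp Require Import all_boot all_order all_algebra.
From mathcomp Require Import all_classical all_reals all_analysis.
From mathcomp Require Import lra.
Set Implicit Arguments. Unset Strict Implicit. Unset Printing Implicit Defensive.
Import Order.TTheory GRing.Theory Num.Theory.
Import numFieldNormedType.Exports.
Local Open Scope classical_set_scope.

Section Hist.
Variables (T : Type) (adj : T -> T -> Prop) (k : nat) (S : cop_strategy T k).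

Lemma history_size r t : size (history S r t) = t.+1.
Proof. by elim: t => //= t IH; rewrite size_rcons IH. Qed.

Lemma history_nth r t i d : (i <= t)%N -> (nth d (history S r t) i).2 = r i.
Proof.
elim: t => [|t IH] /=; first by rewrite leqn0 => /eqP ->.
rewrite nth_rcons history_size leq_eqVlt => /orP[/eqP->|Hi].
  by rewrite ltnn eqxx.
by rewrite Hi IH.
Qed.

Lemma cops0 r : cops S r 0 = s_init S.
Proof. by []. Qed.

Lemma copsS r t : cops S r t.+1 = s_move S (history S r t).
Proof. by rewrite /cops /= last_rcons. Qed.

Lemma history_prefix r1 r2 t : (forall i, (i <= t)%N -> r1 i = r2 i) ->
  history S r1 t = history S r2 t.
Proof.
elim: t => [|t IH] H /=; first by rewrite H.
rewrite IH ?H // => i Hi; apply: H; exact: leqW.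
Qed.

Lemma cops_prefix r1 r2 t : (forall i, (i < t)%N -> r1 i = r2 i) ->
  cops S r1 t = cops S r2 t.
Proof.
case: t => [|t] H; first by [].
by rewrite !copsS (history_prefix (r2:=r2)).
Qed.
End Hist.
Section PathS. Local Open Scope ring_scope.

Lemma comp_within (R : realType) (U : topologicalType) (f : R -> U) (h : R -> R) (A : set R) :
  continuous h -> (forall x, A x -> A (h x)) -> {within A, continuous f} ->
  {within A, continuous (f \o h)}.
Proof.
move=> hc hA /subspace_continuousP fc; apply/subspace_continuousP => x Ax.
apply: (@cvg_comp _ _ _ h f _ (within A (nbhs (h x)))); last exact: fc (hA _ Ax).
move=> W /=; rewrite /within /= => HW.
have := hc x _ HW; rewrite nbhs_simpl /=.
apply: filterS => y Hy Ay; exact: Hy (hA _ Ay).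
Qed.

Lemma curve_path (R : realType) (C : set (R * R)%type) p q :
  (exists f : R -> (R*R)%type, {within `[0, 1]%classic, continuous f} /\ C = f @` `[0, 1]%classic) ->
  C p -> C q ->
  exists f : R -> (R*R)%type, {within `[0, 1]%classic, continuous f} /\
    f 0 = p /\ f 1 = q /\ f @` `[0, 1]%classic `<=` C.
Proof.
move=> [f [fc ->]] [a Ha <-] [b Hb <-].
have hA : forall x, `[0, 1]%classic x -> `[0, 1]%classic (a + x * (b - a)).
  move: Ha Hb => /=; rewrite !in_itv /= => /andP[a0 a1] /andP[b0 b1] x.
  rewrite /= !in_itv /= => /andP[x0 x1]; apply/andP; split; nra.
exists (f \o (fun x => a + x * (b - a))); split.
  apply: comp_within => //.
  move=> x; apply: cvgD; first exact: cvg_cst.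
  apply: cvgMl; exact: cvg_id.
split; first by rewrite /= mul0r addr0.
split; first by rewrite /= mul1r addrC subrK.
move=> _ [x Hx <-]; exists (a + x * (b - a)) => //; exact: hA.
Qed.
End PathS.
Section Geo.
Local Open Scope ring_scope.
Variables (R : realType) (V : finType) (adj : rel V)
  (phi : V -> set (R * R)%type) (Rg : set (R * R)%type).
Hypothesis Hrep : sr_string_rep phi adj.
Variable v0 : V.
Hypothesis Hv0 : sr_contained phi Rg v0.

Local Notation plane := (R * R)%type.
Local Notation split := (sr_split phi Rg).
Definition proj (s : split) : V := (sval s).1.

Definition comp v (p : plane) : set plane := [set y | sr_path_in (phi v `&` Rg) p y].

Lemma const_path (A : set plane) p : A p -> sr_path_in A p p.
Proof.
move=> Ap; exists (fun=> p); split; first exact: continuous_subspaceT (@cst_continuous _ _ p).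
by split => //; split => // _ [x _ <-].
Qed.

Lemma comp_ok v p : phi v p /\ Rg p -> sr_arc_component (phi v `&` Rg) (comp v p).
Proof. by move=> H; exists p. Qed.

Lemma contained_sub v : sr_contained phi Rg v -> phi v `<=` Rg.
Proof. by move=> H x /H /interior_subset. Qed.

Lemma phi_ne v : exists p, phi v p.
Proof.
have [[f [_ ->]] _] := Hrep.1 v.
exists (f 0); exists 0 => //=; rewrite in_itv /=; apply/andP; split => //.
Qed.

Definition pt v : plane := xget (0, 0) (phi v).
Lemma ptP v : phi v (pt v).
Proof. exact: xgetPex (phi_ne v). Qed.

Lemma comp_full v p : sr_contained phi Rg v -> phi v p -> phi v `<=` comp v p.
Proof.
move=> Hc Hp y Hy.
have [f [fc [f0 [f1 fA]]]] := curve_path (Hrep.1 v).1 Hp Hy.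
exists f; split => //; split => //; split => // z Hz; split; first exact: fA.
exact: contained_sub (fA _ Hz).
Qed.

Definition x0 : split := exist _ (v0, comp v0 (pt v0))
   (comp_ok (conj (ptP v0) (contained_sub Hv0 (ptP v0)))).

Definition mk v p : split :=
  match pselect (phi v p /\ Rg p) with
  | left H => exist _ (v, comp v p) (comp_ok H)
  | right _ => x0 end.

Lemma mkE v p : phi v p -> Rg p -> sval (mk v p) = (v, comp v p).
Proof. by move=> H1 H2; rewrite /mk; case: pselect => [//|[]]. Qed.

Definition ipt u w : plane := xget (0, 0) (phi u `&` phi w).

Lemma iptP u w : adj u w -> (phi u `&` phi w) (ipt u w).
Proof.
move=> H; apply: xgetPex.
have Huw : u != w by apply/eqP => E; move: H; rewrite E (negbTE (Hrep.2.1 w)).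
have [_ [_ [H2 _]]] := Hrep.
by have /(H2 _ _ Huw) := H.
Qed.

Definition alive (r : nat -> V) t := forall t', (t' <= t)%N -> sr_contained phi Rg (r t').

Fixpoint L (r : nat -> V) t : split :=
  match t with
  | 0 => mk (r 0) (pt (r 0))
  | t'.+1 => if `[< alive r t' >] then
               (if r t == r t' then L r t' else mk (r t) (ipt (r t') (r t)))
             else L r t'
  end.

Lemma split_sub (s : split) : (sval s).2 `<=` phi (sval s).1.
Proof.
case: s => [[v C]] /= [x [_ ->]] y [f [_ [_ [<- fA]]]].
have : (phi v `&` Rg) (f 1) by apply: fA; exists 1 => //=; rewrite in_itv /=; apply/andP; split.
by case.
Qed.

Lemma split_adj_proj (s t : split) : sr_split_adj s t ->
  proj s = proj t \/ adj (proj s) (proj t).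
Proof.
move=> [_ [p [Hs Ht]]].
have [->|Hne] := eqVneq (proj s) (proj t); first by left.
right; have [_ [_ [H2 _]]] := Hrep; apply/(H2 _ _ Hne).
by exists p; split; [exact: split_sub Hs | exact: split_sub Ht].
Qed.

Lemma L_inv r : robber_legal adj r -> forall t, alive r t ->
  proj (L r t) = r t /\ phi (r t) `<=` (sval (L r t)).2.
Proof.
move=> Hl; elim=> [|t IH] Ha.
  have Hc := Ha 0%N (leqnn _).
  rewrite /= /proj mkE //; last exact: contained_sub (ptP _).
    by split => //; exact: comp_full (ptP _).
  exact: ptP.
have Ha' : alive r t by move=> t' Ht'; apply: Ha; exact: leqW.
rewrite /= asboolT //.
have [E|Hne] := eqVneq (r t.+1) (r t); first by rewrite E; exact: IH.
have Hadj : adj (r t) (r t.+1) by case: (Hl t) => // E; rewrite E eqxx in Hne.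
have [P1 P2] := iptP Hadj.
rewrite /proj mkE //; last exact: contained_sub (Ha' t (leqnn _)) _ P1.
split => //; exact: comp_full (Ha _ (leqnn _)) P2.
Qed.

Lemma L_next r : robber_legal adj r -> forall t, alive r t -> proj (L r t.+1) = r t.+1.
Proof.
move=> Hl t Ha; rewrite /= asboolT //.
have [E|Hne] := eqVneq (r t.+1) (r t); first by rewrite E; exact: (L_inv Hl Ha).1.
have Hadj : adj (r t) (r t.+1) by case: (Hl t) => // E; rewrite E eqxx in Hne.
have [P1 P2] := iptP Hadj.
by rewrite /proj mkE //; exact: contained_sub (Ha t (leqnn _)) _ P1.
Qed.

Lemma L_legal r : robber_legal adj r -> robber_legal (@sr_split_adj R V phi Rg) (L r).
Proof.
move=> Hl t; rewrite /=.
case: asboolP => Ha; last by left.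
have [E|Hne] := eqVneq (r t.+1) (r t); first by left.
have Hadj : adj (r t) (r t.+1) by case: (Hl t) => // E; rewrite E eqxx in Hne.
have [P1 P2] := iptP Hadj.
have [I1 I2] := L_inv Hl Ha.
have HR : Rg (ipt (r t) (r t.+1)) by exact: contained_sub (Ha t (leqnn _)) _ P1.
right; split.
  rewrite mkE // => E; move: I1; rewrite /proj E /= => E'.
  by rewrite E' eqxx in Hne.
exists (ipt (r t) (r t.+1)); split; first exact: I2.
by rewrite mkE //=; apply: const_path.
Qed.

Lemma L_prefix r1 r2 t : (forall i, (i <= t)%N -> r1 i = r2 i) -> L r1 t = L r2 t.
Proof.
elim: t => [|t IH] H; first by rewrite /= H.
have H' : forall i, (i <= t)%N -> r1 i = r2 i by move=> i Hi; apply: H; exact: leqW.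
have Ha : alive r1 t = alive r2 t.
  rewrite /alive; apply/propext; split => Hx t' Ht'; [rewrite -H' | rewrite H']; auto.
by rewrite /= Ha IH // H // H' //.
Qed.


Variables (k : nat) (S' : cop_strategy split k).

Definition rob (h : seq (('I_k -> V) * V)) : nat -> V :=
  fun t => (nth (fun _ => v0, v0) h t).2.

Definition Sfun : cop_strategy V k :=
  CopStrategy (fun i => proj (s_init S' i))
              (fun h i => proj (cops S' (L (rob h)) (size h) i)).

Lemma copsC r t : cops Sfun r t = fun i => proj (cops S' (L r) t i).
Proof.
case: t => [|t]; first by [].
rewrite copsS /= history_size.
rewrite (@cops_prefix _ _ S' _ (L r)) // => i Hi; apply: L_prefix => j Hj.
rewrite /rob history_nth //; apply: leq_trans Hj _; exact: Hi.
Qed.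

Lemma main_cap : captures (@sr_split_adj R V phi Rg) S' setT ->
  confines (@sr_split_adj R V phi Rg) S' (@sr_split_in_GR R V phi Rg) ->
  captures (fun u v => adj u v) Sfun (sr_contained phi Rg).
Proof.
move=> cap conf r Hl Hr0.
have Hll := L_legal Hl.
have [t [Hct Hlt]] := cap (L r) Hll I.
have legT : forall t', cop_step_legal (@sr_split_adj R V phi Rg) S' (L r) t' ->
    cop_step_legal (fun u v => adj u v) Sfun r t'.
  move=> t' H i; rewrite !copsC; case: (H i) => [->|/split_adj_proj]; first by left.
  by case=> ->; [left|right].
have capT : forall t', proj (L r t') = r t' ->
    captured_at S' (L r) t' ->
    captured_at Sfun r t'.
  move=> t' E [i Hi]; exists i; rewrite !copsC -E; case: Hi => ->; [left|right] => //.
case: (pselect (alive r t)) => Ha.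
  exists t; split; first exact: capT (L_inv Hl Ha).1 Hct.
  move=> t' Ht'; exact: legT (Hlt _ Ht').
pose P e := (e <= t)%N && ~~ `[< sr_contained phi Rg (r e) >].
have exP : exists e, P e.
  apply: contrapT => N; apply: Ha => t' Ht'.
  apply: contrapT => Nc; apply: N; exists t'.
  by rewrite /P Ht' /=; apply/negP => /asboolP.
case: (ex_minnP exP) => e /andP[Het /negP Hce] Hmin.
have He0 : e <> 0%N by move=> E; apply: Hce; apply/asboolP; rewrite E.
case: e Het Hce Hmin He0 => [//|e'] Het Hce Hmin _.
have Ha' : alive r e'.
  move=> t' Ht'; apply: contrapT => Nc.
  have : (e'.+1 <= t')%N.
    apply: Hmin; rewrite /P; apply/andP; split.
      by apply: leq_trans Het; apply: leq_trans Ht' _; exact: leqnSn.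
    by apply/negP => /asboolP.
  by rewrite ltnNge Ht'.
case: (pselect (exists t', (t' < e'.+1)%N /\
   captured_at S' (L r) t')) => [[t' [Ht' Hc]]|N].
  have Hat : alive r t' by move=> s Hs; apply: Ha'; apply: leq_trans Hs _.
  exists t'; split; first exact: capT (L_inv Hl Hat).1 Hc.
  move=> s Hs; apply: legT; apply: Hlt; apply: leq_trans Hs _.
  apply: leq_trans Het; exact: ltnW.
have Hn := L_next Hl Ha'.
have Hc : captured_at S' (L r) e'.+1.
  apply: conf => //.
    by move=> t' Ht' Hc; apply: N; exists t'.
  by rewrite /sr_split_in_GR /=; move: Hn; rewrite /proj => ->; move=> H; apply: Hce; apply/asboolP.
exists e'.+1; split; first exact: capT Hn Hc.
move=> s Hs; apply: legT; apply: Hlt; exact: leq_trans Hs Het.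
Qed.

End Geo.

Theorem lemma11 (R : realType) (V : finType) (adj : rel V)
    (phi : V -> set (R * R)%type) (Rg : set (R * R)%type) (k : nat) :
  sr_string_rep phi adj -> sr_region phi Rg ->
  (exists S' : cop_strategy (sr_split phi Rg) k,
     captures (@sr_split_adj R V phi Rg) S' setT /\
     confines (@sr_split_adj R V phi Rg) S' (@sr_split_in_GR R V phi Rg)) ->
  exists S : cop_strategy V k,
    captures (fun u v => adj u v) S (sr_contained phi Rg).
Proof.
move=> Hrep _ [S' [cap conf]].
case: (pselect (exists v, sr_contained phi Rg v)) => [[v0 Hv0]|N].
  by exists (Sfun Hrep Hv0 S'); exact: main_cap.
exists (CopStrategy (fun i => (sval (s_init S' i)).1) (fun _ i => (sval (s_init S' i)).1)).
by move=> r _ H0; exfalso; apply: N; exists (r 0%N).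
Qed.
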